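(* Let $E$ be a regular biordered set satisfying (E1), (E2), (E3) below, let $e,f\in E$ with $f\,\omega\,e'$, and let $h=e\oplus f$. Then: (i) $e\,\omega\,h$ and $f\,\omega\,h$; (ii) if $g\in E$ satisfies $e\,\omega^l\,g$ and $f\,\omega^l\,g$, then $h\,\omega^l\,g$; (iii) if $g\in E$ satisfies $e\,\omega^r\,g$ and $f\,\omega^r\,g$, then $h\,\omega^r\,g$. Moreover, $h$ is the unique element of $E$ satisfying (i)–(iii). Conditions: (E1) there exists $0\in E$ with $0\,\omega\,x$ for every $x\in E$; (E2) there is a map $x\mapsto x'$ on $E$ such that for all $x,y\in E$: $(x')'=x$; $y\,\omega^l\,x$ iff $x'\,\omega^r\,y'$; $y\,\omega^l\,x'$ iff $M(y,x)=\{0\}$; (E3) for all $x,y\in E$, if $y\,\omega\,x'$ then $S(x',y')\cap S(y',x')\ne\emptyset$.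
   Context: A regular biordered set is a partial algebra isomorphic to the set of idempotents $E(S)$ of a regular semigroup $S$ (regular: every $x$ has $y$ with $xyx=x$), where $ef$ (computed in $S$) is defined when $\{ef,fe\}\cap\{e,f\}\ne\emptyset$. In $E$: $\omega^l=\{(e,f): ef=e\}$, $\omega^r=\{(e,f): fe=e\}$, $\omega=\omega^l\cap\omega^r$; $M(e,f)=\{g\in E: g\,\omega^l\,e,\ g\,\omega^r\,f\}$; for $g,h\in M(e,f)$, $g\preceq h$ iff $eg\,\omega^r\,eh$ and $gf\,\omega^l\,hf$; $S(e,f)=\{h\in M(e,f): g\preceq h\text{ for all }g\in M(e,f)\}$. Under (E1)–(E3), for $f\,\omega\,e'$ the set $S(e',f')\cap S(f',e')$ has exactly one element $k$, and $e\oplus f$ is defined to be $k'$. *)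

(* Defs.v *)
(* A regular biordered set is (up to isomorphism)
   the set E(S) of idempotents of a regular semigroup S; we therefore work
   with an arbitrary regular semigroup (T, mul) and its idempotents. *)

Set Implicit Arguments.
Section Biorder.
Context {T : Type}.
Variable mul : T -> T -> T.

Definition associative := forall x y z, mul x (mul y z) = mul (mul x y) z.
Definition regular := forall x, exists y, mul (mul x y) x = x.

Definition idem (e : T) := mul e e = e.

Definition wl (e f : T) := mul e f = e.
Definition wr (e f : T) := mul f e = e.
Definition w (e f : T) := wl e f /\ wr e f.

Definition Mset (e f g : T) := idem g /\ wl g e /\ wr g f.

Definition prec (e f g h : T) :=
  wr (mul e g) (mul e h) /\ wl (mul g f) (mul h f).

Definition Sset (e f h : T) :=
  Mset e f h /\ forall g, Mset e f g -> prec e f g h.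

Definition E1 (z : T) := idem z /\ forall x, idem x -> w z x.

Definition E2 (z : T) (p : T -> T) :=
  (forall x, idem x -> idem (p x)) /\
  (forall x y, idem x -> idem y ->
     p (p x) = x /\
     (wl y x <-> wr (p x) (p y)) /\
     (wl y (p x) <-> (forall g, Mset y x g <-> g = z))).

Definition E3 (p : T -> T) :=
  forall x y, idem x -> idem y -> w y (p x) ->
    exists k, Sset (p x) (p y) k /\ Sset (p y) (p x) k.

End Biorder.

(* Main.v *)
Require Import Defs.

Theorem proposition5p3 (T : Type) (mul : T -> T -> T)
  (Hassoc : associative mul) (Hreg : regular mul)
  (z : T) (p : T -> T)
  (HE1 : E1 mul z) (HE2 : E2 mul z p) (HE3 : E3 mul p)
  (e f : T) (he : idem mul e) (hf : idem mul f) (hfe : w mul f (p e))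
  (k : T) (hk1 : Sset mul (p e) (p f) k) (hk2 : Sset mul (p f) (p e) k)
  (h : T) (hh : h = p k) :
  (* (i) *)
  (w mul e h /\ w mul f h) /\
  (* (ii) *)
  (forall g, idem mul g -> wl mul e g -> wl mul f g -> wl mul h g) /\
  (* (iii) *)
  (forall g, idem mul g -> wr mul e g -> wr mul f g -> wr mul h g) /\
  (* uniqueness *)
  (forall h', idem mul h' ->
     (w mul e h' /\ w mul f h') ->
     (forall g, idem mul g -> wl mul e g -> wl mul f g -> wl mul h' g) ->
     (forall g, idem mul g -> wr mul e g -> wr mul f g -> wr mul h' g) ->
     h' = h).
Proof.
  destruct HE2 as [Pid Hsp].
  assert (pp : forall x, idem mul x -> p (p x) = x) by (intros x hx; exact (proj1 (Hsp x x hx hx))).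
  assert (cl : forall x y, idem mul x -> idem mul y -> (wl mul y x <-> wr mul (p x) (p y)))
    by (intros x y hx hy; exact (proj1 (proj2 (Hsp x y hx hy)))).
  assert (cr : forall a b, idem mul a -> idem mul b -> (wr mul a b <-> wl mul (p b) (p a))).
  { intros a b ha hb. pose proof (cl (p a) (p b) (Pid a ha) (Pid b hb)) as H.
    rewrite (pp a ha), (pp b hb) in H. split; intro; apply H; assumption. }
  destruct hk1 as [[hk hk1l] hk1S].
  destruct hk2 as [[_ [hk2l hk2r]] _].
  destruct hk1l as [hk1l hk1r'].
  pose proof (Pid e he) as he'. pose proof (Pid f hf) as hf'.
  pose proof (Pid k hk) as hk'.
  assert (hh' : idem mul h) by (subst h; exact hk').
  assert (HI : w mul e h /\ w mul f h).
  { subst h. split; split.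
    - apply (cl (p k) e hk' he). rewrite (pp k hk). exact hk2r.
    - apply (cr e (p k) he hk'). rewrite (pp k hk). exact hk1l.
    - apply (cl (p k) f hk' hf). rewrite (pp k hk). exact hk1r'.
    - apply (cr f (p k) hf hk'). rewrite (pp k hk). exact hk2l. }
  assert (HII : forall g, idem mul g -> wl mul e g -> wl mul f g -> wl mul h g).
  { intros g hg Heg Hfg. subst h.
    pose proof (Pid g hg) as hg'.
    apply (cl g e hg he) in Heg. apply (cl g f hg hf) in Hfg.
    apply (cl g (p k) hg hk'). rewrite (pp k hk).
    unfold wr, wl, idem in *.
    set (G := p g) in *. set (E' := p e) in *. set (F' := p f) in *.
    assert (Hm : Mset mul E' F' (mul G E')).
    { split; [|split]; unfold idem, wl, wr.
      - rewrite <- !Hassoc. rewrite (Hassoc E' G E'), Heg, (Hassoc G G E'), hg'. reflexivity.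
      - rewrite <- Hassoc, he'. reflexivity.
      - rewrite (Hassoc F' G E'), Hfg. reflexivity. }
    destruct (hk1S _ Hm) as [P1 _]. unfold wr in P1.
    rewrite hk2r, (Hassoc E' G E'), Heg in P1.
    assert (H2 : mul (mul k (mul G E')) G = mul (mul G E') G) by (rewrite P1; reflexivity).
    rewrite <- !Hassoc in H2. rewrite Heg, hg' in H2.
    exact H2. }
  assert (HIII : forall g, idem mul g -> wr mul e g -> wr mul f g -> wr mul h g).
  { intros g hg Heg Hfg. subst h.
    pose proof (Pid g hg) as hg'.
    apply (cr e g he hg) in Heg. apply (cr f g hf hg) in Hfg.
    apply (cr (p k) g hk' hg). rewrite (pp k hk).
    unfold wr, wl, idem in *.
    set (G := p g) in *. set (E' := p e) in *. set (F' := p f) in *.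
    assert (Hm : Mset mul E' F' (mul F' G)).
    { split; [|split]; unfold idem, wl, wr.
      - rewrite <- !Hassoc. rewrite (Hassoc G F' G), Hfg, hg'. reflexivity.
      - rewrite <- Hassoc, Heg. reflexivity.
      - rewrite Hassoc, hf'. reflexivity. }
    destruct (hk1S _ Hm) as [_ P2]. unfold wl in P2.
    rewrite hk2l in P2. rewrite <- (Hassoc F' G F'), Hfg in P2.
    assert (H2 : mul G (mul (mul F' G) k) = mul G (mul F' G)) by (rewrite P2; reflexivity).
    rewrite !Hassoc in H2. rewrite Hfg, hg' in H2. exact H2. }
  split; [exact HI|]. split; [exact HII|]. split; [exact HIII|].
  intros h' hh'' [[Hel Her] [Hfl Hfr]] HII' HIII'.
  destruct HI as [[Hel0 Her0] [Hfl0 Hfr0]].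
  assert (A1 : wl mul h h') by (apply HII; assumption).
  assert (A2 : wr mul h h') by (apply HIII; assumption).
  assert (A3 : wl mul h' h) by (apply HII'; assumption).
  unfold wl, wr in *. congruence.
Qed.
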